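(* Assume $K$ is a perfect $A$-field and let $\phi,\psi$ be Drinfeld modules over $K$ with $\operatorname{rk}\phi<\operatorname{rk}\psi$. Then there is a short exact sequence of $\mathbf t^\sigma$-modules $$0\to\operatorname{Ext}^1_{0,\tau}(\phi,\psi)\to\operatorname{Ext}^1_\tau(\phi,\psi)\to\mathbb G_a\to0,$$ where $\operatorname{Ext}^1_{0,\tau}(\phi,\psi)$ and $\operatorname{Ext}^1_\tau(\phi,\psi)$ carry natural $\mathbf t^\sigma$-module structures (i.e. they are, as $\mathbb F_q[t]$-modules, the Mordell–Weil modules of $\mathbf t^\sigma$-modules, the first map inducing the natural inclusion) and $\mathbb G_a$ is the one-dimensional $\mathbf t^\sigma$-module $t\mapsto\theta$.
   Context: $A=\mathbb F_q[t]$; $K$ a perfect field of characteristic $p$ with $\mathbb F_q$-algebra map $\iota:A\to K$, $\theta=\iota(t)$. $K\{\tau\}$: twisted polynomials with $\tau x=x^q\tau$; $K\{\sigma\}$: twisted polynomials with $\sigma x=x^{q^{-1}}\sigma$. A $\mathbf t$-module (resp. $\mathbf t^\sigma$-module) of dimension $d$ is an $\mathbb F_q$-algebra homomorphism $\Phi:\mathbb F_q[t]\to\mathrm{Mat}_d(K\{\tau\})$ (resp. $\mathrm{Mat}_d(K\{\sigma\})$) with $\Phi_t=(\theta I+N)+\sum_{i\ge1}M_i\tau^i$ (resp. $\sigma^i$), $N$ nilpotent; rank $=$ degree of $\Phi_t$; a Drinfeld module is a one-dimensional $\mathbf t$-module. Mordell–Weil module of a $\mathbf t^\sigma$-module: $K^d$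 with $t$ acting via evaluation of $\Phi_t$, $\sigma$ acting as $x\mapsto x^{q^{-1}}$. Morphisms of $\mathbf t^\sigma$-modules from $\Psi$ (dim $e$) to $\Phi$ (dim $d$): $f\in\mathrm{Mat}_{d\times e}(K\{\sigma\})$ with $f\Psi_t=\Phi_tf$; short exact sequence: composable morphisms whose underlying sequence of algebraic groups is short exact. $\mathrm{Der}(\phi,\psi)$: $\mathbb F_q$-linear $\delta:\mathbb F_q[t]\to K\{\tau\}$ with $\delta(ab)=\psi_a\delta(b)+\delta(a)\phi_b$; inner: $\delta^{(U)}(a)=U\phi_a-\psi_aU$; $\operatorname{Ext}^1_\tau(\phi,\psi)=\mathrm{Der}/\mathrm{Der}_{in}$ with $a*[\delta]=[\psi_a\delta]$; $\mathrm{Der}_0$ = those $\delta$ with $\delta(t)$ of zero constant term, $\operatorname{Ext}^1_{0,\tau}=\mathrm{Der}_0/(\mathrm{Der}_0\cap\mathrm{Der}_{in})$. *)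

(* Defs.v *)
From HB Require Import structures.
From mathcomp Require Import all_boot all_order all_algebra.
Set Implicit Arguments. Unset Strict Implicit. Unset Printing Implicit Defensive.
Import GRing.Theory.
Local Open Scope ring_scope.

(* An element  sum_i a_i T^i  of R{T} (T = tau or
   sigma) is stored as its coefficient polynomial a : {poly R} (a`_i = a_i).
   The commutation rule is  T x = fr(x) T  for a ring endomorphism fr
   (fr = x |-> x^q for tau, fr = x |-> x^(1/q) for sigma), so
   (sum a_i T^i)(sum b_j T^j) = sum_k (sum_(i<=k) a_i fr^i(b_(k-i))) T^k.   *)
Section Twisted.
Variable R : nzRingType.

Definition twmul (fr : R -> R) (f g : {poly R}) : {poly R} :=
  \poly_(k < (size f + size g).-1) \sum_(i < k.+1) f`_i * iter i fr (g`_(k - i)).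

Definition twpow (fr : R -> R) (f : {poly R}) (n : nat) : {poly R} :=
  iter n (twmul fr f) 1.

Definition tweval (fr : R -> R) (f : {poly R}) (x : R) : R :=
  \sum_(i < size f) f`_i * iter i fr x.

Definition twmx (fr : R -> R) m n l (F : 'M[{poly R}]_(m, n))
    (G : 'M[{poly R}]_(n, l)) : 'M[{poly R}]_(m, l) :=
  \matrix_(i, k) \sum_(j < n) twmul fr (F i j) (G j k).

Definition twmxeval (fr : R -> R) m n (F : 'M[{poly R}]_(m, n))
    (x : 'cV[R]_n) : 'cV[R]_m :=
  \col_i \sum_(j < n) tweval fr (F i j) (x j 0).
End Twisted.

Section Setting.
Variables (Fq : finFieldType) (K : fieldType) (iota0 : {rmorphism Fq -> K}).
Variable theta : K.        (* theta = iota(t) *)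
Variable qroot : K -> K.   (* inverse of the q-Frobenius (K perfect)        *)

Definition qq : nat := #|Fq|.
Definition frobq (x : K) : K := x ^+ qq.

Definition taumul := twmul frobq.
Definition sigmul := twmul qroot.

(* A t^sigma-module of dimension d is an F_q-algebra map
   Phi : F_q[t] -> Mat_d(K{sigma}); since F_q[t] is free on t it is given by
   Phi_t, subject to Phi_t = (theta I + N) + sum_(i>=1) M_i sigma^i with N
   nilpotent. *)
Definition is_tsigma_module d (Phit : 'M[{poly K}]_d) : Prop :=
  exists n : nat,
    ((\matrix_(i, j) (Phit i j)`_0 - theta%:M : 'M[K]_d) ^+ n) = 0.

Definition is_tsigma_morphism d e (Psit : 'M[{poly K}]_e)
    (Phit : 'M[{poly K}]_d) (f : 'M[{poly K}]_(d, e)) : Prop :=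
  twmx qroot f Psit = twmx qroot Phit f.

Definition mw_t d (Phit : 'M[{poly K}]_d) (x : 'cV[K]_d) : 'cV[K]_d :=
  twmxeval qroot Phit x.

Definition Ga_t : 'M[{poly K}]_1 := const_mx theta%:P.

(* A Drinfeld module phi is a one-dimensional t-module, given by
   phi_t = theta + sum_(i>=1) a_i tau^i  (1x1 nilpotent part is 0);
   its rank is deg phi_t. *)
Definition is_drinfeld (phit : {poly K}) : Prop := phit`_0 = theta.
Definition drank (phit : {poly K}) : nat := (size phit).-1.

Definition dm (phit : {poly K}) (a : {poly Fq}) : {poly K} :=
  \sum_(k < size a) iota0 a`_k *: twpow frobq phit k.

Definition is_der (phit psit : {poly K}) (delta : {poly Fq} -> {poly K}) :=
  [/\ forall a b, delta (a + b) = delta a + delta b,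
      forall (c : Fq) a, delta (c *: a) = iota0 c *: delta a &
      forall a b, delta (a * b) =
        taumul (dm psit a) (delta b) + taumul (delta a) (dm phit b)].

Definition is_inner_der (phit psit : {poly K})
    (delta : {poly Fq} -> {poly K}) : Prop :=
  exists U : {poly K}, forall a,
    delta a = taumul U (dm phit a) - taumul (dm psit a) U.

Definition is_der0 (phit psit : {poly K}) (delta : {poly Fq} -> {poly K}) :=
  is_der phit psit delta /\ (delta 'X)`_0 = 0.

(* Module structure on Ext^1: a * [delta] = [psi_a delta]; on derivations we
   record the actions of t and of c in F_q, which generate F_q[t]. *)
Definition der_tact (psit : {poly K}) (delta : {poly Fq} -> {poly K}) :=
  fun b => taumul psit (delta b).
Definition der_add (d1 d2 : {poly Fq} -> {poly K}) := fun b => d1 b + d2 b.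
Definition der_scale (c : Fq) (delta : {poly Fq} -> {poly K}) :=
  fun b => iota0 c *: delta b.

(* [presents P Phit pi] : pi induces an isomorphism of F_q[t]-modules from
   the quotient  {delta | P delta} / {delta | P delta /\ inner delta}
   onto the Mordell-Weil module of the t^sigma-module Phit: pi is
   F_q[t]-linear on the P-derivations, onto, with kernel the inner ones. *)
Definition presents (phit psit : {poly K}) (P : ({poly Fq} -> {poly K}) -> Prop)
    d (Phit : 'M[{poly K}]_d) (pi : ({poly Fq} -> {poly K}) -> 'cV[K]_d) :=
  [/\ forall d1 d2, P d1 -> P d2 -> pi (der_add d1 d2) = pi d1 + pi d2,
      forall c delta, P delta -> pi (der_scale c delta) = iota0 c *: pi delta,
      forall delta, P delta -> pi (der_tact psit delta) = mw_t Phit (pi delta),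
      forall x, exists2 delta, P delta & pi delta = x &
      forall delta, P delta -> (pi delta = 0 <-> is_inner_der phit psit delta)].
End Setting.

(* Short exactness of 0 -> E0 -f-> E -g-> G_a -> 0 as algebraic groups:
   exactness on points over an algebraically closed field L containing K,
   where sigma acts on L-points as the inverse q-Frobenius qrootL of L. *)
Definition exact_over (K : fieldType) (L : closedFieldType)
    (j : {rmorphism K -> L}) (qrootL : L -> L) d0 d
    (f : 'M[{poly K}]_(d, d0)) (g : 'M[{poly K}]_(1, d)) : Prop :=
  let fL := twmxeval qrootL (map_mx (map_poly j) f) in
  let gL := twmxeval qrootL (map_mx (map_poly j) g) in
  [/\ injective fL,
      forall y : 'cV[L]_1, exists x, gL x = y &
      forall x : 'cV[L]_d, gL x = 0 <-> exists z, fL z = x].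

(* Main.v *)
Require Import Defs.
From HB Require Import structures.
From mathcomp Require Import all_boot all_order all_algebra.
From mathcomp Require Import all_fingroup all_solvable all_field.
From mathcomp Require Import zify.
From Stdlib Require Import IndefiniteDescription.
Import GRing.Theory.
Local Open Scope ring_scope.

Module Helpers.
Set Implicit Arguments. Unset Strict Implicit. Unset Printing Implicit Defensive.

Lemma zmod4 (V : zmodType) (a b c d : V) : a - b + (c - d) = a - d - (b - c).
Proof. by rewrite opprB addrACA [RHS]addrACA (addrC (-b)). Qed.

Section TwRing.
Variable K : fieldType.
Variable fr : {rmorphism K -> K}.

Lemma it0 n : iter n fr 0 = 0.
Proof. by elim: n => //= n ->; rewrite rmorph0. Qed.
Lemma it1 n : iter n fr 1 = 1.
Proof. by elim: n => //= n ->; rewrite rmorph1. Qed.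
Lemma itD n x y : iter n fr (x + y) = iter n fr x + iter n fr y.
Proof. by elim: n => //= n ->; rewrite rmorphD. Qed.
Lemma itN n x : iter n fr (- x) = - iter n fr x.
Proof. by elim: n => //= n ->; rewrite rmorphN. Qed.
Lemma itB n x y : iter n fr (x - y) = iter n fr x - iter n fr y.
Proof. by rewrite itD itN. Qed.
Lemma itM n x y : iter n fr (x * y) = iter n fr x * iter n fr y.
Proof. by elim: n => //= n ->; rewrite rmorphM. Qed.
Lemma it_sum n I (r : seq I) (P : pred I) (F : I -> K) :
  iter n fr (\sum_(i <- r | P i) F i) = \sum_(i <- r | P i) iter n fr (F i).
Proof.
elim: r => [|a r IH]; first by rewrite !big_nil it0.
by rewrite !big_cons; case: (P a); rewrite ?itD IH.
Qed.
Lemma itA m n x : iter m fr (iter n fr x) = iter (m + n) fr x.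
Proof. by rewrite iterD. Qed.

Lemma coef_twmul f g k :
  (twmul fr f g)`_k = \sum_(i < k.+1) f`_i * iter i fr (g`_(k - i)).
Proof.
rewrite coef_poly; case: ltnP => // hk; symmetry; apply: big1 => i _.
case: (ltnP i (size f)) => hi; last by rewrite nth_default // mul0r.
rewrite (nth_default 0 (_ : size g <= k - i)%N) ?it0 ?mulr0 //.
have := ltn_ord i; lia.
Qed.

Lemma sum_shift (F : nat -> K) j n : (j <= n)%N ->
  \sum_(i < n | (j <= i)%N) F i = \sum_(l < n - j) F (j + l).
Proof.
move=> hj; rewrite -big_mkord (big_cat_nat (n := j)) //=.
rewrite big1_seq ?add0r; last first.
  by move=> i /andP[hi]; rewrite mem_index_iota => /andP[_ hij]; rewrite leqNgt hij in hi.
transitivity (\sum_(j <= i < n) F i).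
  rewrite big_nat_cond [RHS]big_nat_cond; apply: eq_bigl => i.
  by case: (j <= i)%N; rewrite ?andbT ?andbF.
rewrite -{1}(add0n j) big_addn big_mkord; apply: eq_bigr => i _.
by rewrite addnC.
Qed.

Lemma twmulA : associative (twmul fr).
Proof.
move=> f g h; apply/polyP => k; rewrite !coef_twmul.
pose A (i j : nat) := f`_j * iter j fr (g`_(i - j)) * iter i fr (h`_(k - i)).
transitivity (\sum_(j < k.+1) \sum_(i < k.+1 | (j <= i)%N) A i j); last first.
  rewrite (exchange_big_dep predT) //=; apply: eq_bigr => i _.
  rewrite coef_twmul mulr_suml.
  rewrite (big_ord_narrow_leq (F := fun j => A i j) (leq_ord i)) /=.
  by apply: eq_bigr.
apply: eq_bigr => j _; rewrite (sum_shift (fun i => A i j)); last by apply: ltnW. rewrite (coef_twmul g h (k - j)) it_sum mulr_sumr.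
rewrite subSn ?(leq_ord j) //; apply: eq_bigr => l _.
by rewrite /A itM mulrA itA addKn subnDA.
Qed.

Lemma twmul1l : left_id (1 : {poly K}) (twmul fr).
Proof.
move=> f; apply/polyP => k; rewrite coef_twmul big_ord_recl coefC eqxx mul1r /= subn0.
rewrite big1 ?addr0 // => i _; by rewrite coefC /= mul0r.
Qed.

Lemma twmul1r : right_id (1 : {poly K}) (twmul fr).
Proof.
move=> f; apply/polyP => k; rewrite coef_twmul big_ord_recr /= subnn coefC eqxx it1 mulr1.
rewrite big1 ?add0r // => i _; rewrite coefC.
have := ltn_ord i; case: eqP => [h|_]; first lia.
by rewrite it0 mulr0.
Qed.

Lemma twmulDl : left_distributive (twmul fr) +%R.
Proof.
move=> f g h; apply/polyP => k; rewrite coefD !coef_twmul -big_split /=.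
by apply: eq_bigr => i _; rewrite coefD mulrDl.
Qed.

Lemma twmulDr : right_distributive (twmul fr) +%R.
Proof.
move=> f g h; apply/polyP => k; rewrite coefD !coef_twmul -big_split /=.
by apply: eq_bigr => i _; rewrite coefD itD mulrDr.
Qed.

Lemma twmulCl (c : K) f : twmul fr c%:P f = c *: f.
Proof.
apply/polyP => k; rewrite coef_twmul big_ord_recl coefC eqxx /= subn0 coefZ.
rewrite big1 ?addr0 // => i _; by rewrite coefC /= mul0r.
Qed.

Lemma coef_twmulCr (c : K) f k : (twmul fr f c%:P)`_k = f`_k * iter k fr c.
Proof.
rewrite coef_twmul big_ord_recr /= subnn coefC eqxx.
rewrite big1 ?add0r // => i _; rewrite coefC.
have := ltn_ord i; case: eqP => [h|_]; first lia.
by rewrite it0 mulr0.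
Qed.

Lemma size_twmul (f g : {poly K}) : (size (twmul fr f g) <= (size f + size g).-1)%N.
Proof. exact: size_poly. Qed.

Lemma coef_top (f g : {poly K}) n m : (size f <= n.+1)%N -> (size g <= m.+1)%N ->
  (twmul fr f g)`_(n + m) = f`_n * iter n fr (g`_m).
Proof.
move=> hf hg; rewrite coef_twmul.
have hn : (n < (n + m).+1)%N by lia.
rewrite (bigD1 (Ordinal hn)) //= addKn big1 ?addr0 // => i /eqP hi.
have hi' : (i : nat) <> n by move=> e; apply: hi; apply: val_inj.
case: (ltnP n i) => h.
  by rewrite (nth_default 0 (_ : size f <= i)%N) ?mul0r //; lia.
by rewrite (nth_default 0 (_ : size g <= n + m - i)%N) ?it0 ?mulr0 //; lia.
Qed.

Lemma itfr_eq0 n x : (iter n fr x == 0) = (x == 0).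
Proof. by elim: n => //= n IH; rewrite fmorph_eq0. Qed.

Lemma coef_twmul_monoR (f : {poly K}) c m k :
  (twmul fr f (c *: 'X^m))`_k = if (m <= k)%N then f`_(k - m) * iter (k - m) fr c else 0.
Proof.
rewrite coef_twmul; case: (leqP m k) => hmk.
  have hi : (k - m < k.+1)%N by lia.
  rewrite (bigD1 (Ordinal hi)) //= big1 ?addr0.
    by rewrite coefZ coefXn subKn // eqxx mulr1.
  move=> i /eqP hi'; rewrite coefZ coefXn.
  have : (k - i)%N != m.
    apply/eqP => e; apply: hi'; apply: val_inj => /=; have := ltn_ord i; lia.
  by move/negbTE => ->; rewrite mulr0 it0 mulr0.
rewrite big1 // => i _; rewrite coefZ coefXn.
have : (k - i)%N != m by apply/eqP; lia.
by move/negbTE => ->; rewrite mulr0 it0 mulr0.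
Qed.

Lemma coef_twmul_monoL (g : {poly K}) c m k :
  (twmul fr (c *: 'X^m) g)`_k = if (m <= k)%N then c * iter m fr g`_(k - m) else 0.
Proof.
rewrite coef_twmul; case: (leqP m k) => hmk.
  have hi : (m < k.+1)%N by lia.
  rewrite (bigD1 (Ordinal hi)) //= big1 ?addr0.
    by rewrite coefZ coefXn eqxx mulr1.
  move=> i /eqP hi'; rewrite coefZ coefXn.
  have : (i : nat) != m by apply/eqP => e; apply: hi'; apply: val_inj.
  by move/negbTE => ->; rewrite mulr0 mul0r.
rewrite big1 // => i _; rewrite coefZ coefXn.
have : (i : nat) != m by apply/eqP => e; have := ltn_ord i; lia.
by move/negbTE => ->; rewrite mulr0 mul0r.
Qed.

Lemma itV n x : iter n fr x^-1 = (iter n fr x)^-1.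
Proof. by elim: n => //= n ->; rewrite fmorphV. Qed.

Definition tw (f : {rmorphism K -> K}) : Type := {poly K}.
HB.instance Definition _ := GRing.Zmodule.copy (tw fr) {poly K}.
Lemma tw_one_neq0 : (1 : {poly K}) != 0.
Proof. exact: oner_neq0. Qed.
HB.instance Definition _ := GRing.Zmodule_isNzRing.Build (tw fr)
  twmulA twmul1l twmul1r twmulDl twmulDr tw_one_neq0.

Lemma twE (f g : {poly K}) : twmul fr f g = ((f : tw fr) * (g : tw fr) : tw fr).
Proof. by []. Qed.

Lemma twmul0l (p : {poly K}) : twmul fr 0 p = 0.
Proof. by rewrite twE mul0r. Qed.
Lemma twmul0r (p : {poly K}) : twmul fr p 0 = 0.
Proof. by rewrite twE mulr0. Qed.
End TwRing.


Section Frob.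
Variables (Fq : finFieldType) (K : fieldType) (iota0 : {rmorphism Fq -> K}).

Lemma qq_pnat : [pchar K].-nat (qq Fq).
Proof.
have /is_abelemP[p pr_p abF] := finField_is_abelem Fq.
have := abelem_pgroup abF; rewrite /pgroup cardsT => /p_natP[n hn].
have pc : p \in [pchar Fq] := card_finPcharP hn pr_p.
rewrite /qq hn pnatX pnatE // (fmorph_pchar iota0) pc //.
Qed.

Lemma frobq_is_zmod : zmod_morphism (frobq Fq (K:=K)).
Proof.
move=> x y; rewrite /frobq.
have h := exprDn_pchar (x - y) y qq_pnat; rewrite subrK in h.
by rewrite h addrK.
Qed.

Lemma frobq_is_monoid : monoid_morphism (frobq Fq (K:=K)).
Proof. by split; rewrite /frobq ?expr1n // => x y; rewrite exprMn. Qed.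

HB.instance Definition _ := GRing.isZmodMorphism.Build K K (frobq Fq (K:=K)) frobq_is_zmod.
HB.instance Definition _ := GRing.isMonoidMorphism.Build K K (frobq Fq (K:=K)) frobq_is_monoid.

Definition frobR : {rmorphism K -> K} := frobq Fq (K:=K).

Lemma frob_iota c : frobq Fq (iota0 c) = iota0 c.
Proof. by rewrite /frobq -rmorphXn /qq expf_card. Qed.

End Frob.

Section Der.
Variables (Fq : finFieldType) (K : fieldType) (iota0 : {rmorphism Fq -> K}).
Local Notation fr := (@frobR Fq K iota0).
Local Notation T := (@tw K fr).

Lemma it_iota n c : iter n fr (iota0 c) = iota0 c.
Proof. by elim: n => //= n ->; exact: frob_iota. Qed.

Definition cT (c : Fq) : T := (iota0 c)%:P.

Lemma cT_is_zmod : zmod_morphism cT.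
Proof. by move=> x y; rewrite /cT rmorphB polyCB. Qed.
Lemma cT_is_monoid : monoid_morphism cT.
Proof.
split; first by rewrite /cT rmorph1.
move=> x y; rewrite /cT /= -[RHS]/(twmul fr _ _) twmulCl scale_polyC rmorphM //.
Qed.
HB.instance Definition _ := GRing.isZmodMorphism.Build Fq T cT cT_is_zmod.
HB.instance Definition _ := GRing.isMonoidMorphism.Build Fq T cT cT_is_monoid.

Lemma cT_central c (x : T) : cT c * x = x * cT c.
Proof.
apply/polyP => k; rewrite -[_ * _]/(twmul fr _ _) -[x * _]/(twmul fr _ _).
by rewrite twmulCl coefZ coef_twmulCr it_iota mulrC.
Qed.

Lemma cT_inj : injective cT.
Proof. by move=> x y /polyC_inj /fmorph_inj. Qed.

Lemma twpowE (f : {poly K}) n : twpow (frobq Fq (K:=K)) f n = (f : T) ^+ n.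
Proof. by elim: n => [|n IH] //=; rewrite exprS -IH. Qed.

Lemma dmE (f : {poly K}) (a : {poly Fq}) :
  dm iota0 f a = (map_poly cT a).[(f : T)].
Proof.
rewrite horner_coef size_map_inj_poly ?rmorph0 //; last exact: cT_inj.
rewrite /dm; apply: eq_bigr => i _; rewrite coef_map /= twpowE.
by rewrite -[_ * _]/(twmul fr _ _) twmulCl.
Qed.

Lemma dm_mul (f : {poly K}) a b :
  dm iota0 f (a * b) = ((dm iota0 f a : T) * (dm iota0 f b : T) : T).
Proof.
rewrite !dmE rmorphM hornerM_comm //; apply: comm_coef_poly => i.
by rewrite coef_map /= cT_central.
Qed.

Lemma dm_add (f : {poly K}) a b :
  dm iota0 f (a + b) = dm iota0 f a + dm iota0 f b.
Proof. by rewrite !dmE rmorphD hornerD. Qed.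

Lemma dm_scale (f : {poly K}) c a :
  dm iota0 f (c *: a) = ((cT c : T) * (dm iota0 f a : T) : T).
Proof. by rewrite !dmE -mul_polyC rmorphM /= map_polyC hornerCM. Qed.

Lemma dm1 (f : {poly K}) : dm iota0 f 1 = 1.
Proof. by rewrite dmE rmorph1 hornerC. Qed.

Lemma dmX (f : {poly K}) : dm iota0 f 'X = f.
Proof. by rewrite dmE map_polyX hornerX. Qed.

End Der.

Section Der2.
Variables (Fq : finFieldType) (K : fieldType) (iota0 : {rmorphism Fq -> K}).
Local Notation fr := (@frobR Fq K iota0).
Local Notation T := (@tw K fr).
Variables phit psit : {poly K}.
Local Notation cT := (@cT Fq K iota0).

Lemma taumulE (f g : {poly K}) : taumul Fq f g = ((f : T) * (g : T) : T).
Proof. by []. Qed.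

Definition Mx (D : T) : 'M[T]_2 := \matrix_(i, j)
  if (i : nat) == 0%N then (if (j : nat) == 0%N then (psit : T) else D)
  else (if (j : nat) == 0%N then 0 else (phit : T)).

Definition cM (c : Fq) : 'M[T]_2 := (cT c)%:M.
Lemma cM_is_zmod : zmod_morphism cM.
Proof. by move=> x y; rewrite /cM rmorphB raddfB. Qed.
Lemma cM_is_monoid : monoid_morphism cM.
Proof.
split; first by rewrite /cM rmorph1.
by move=> x y; rewrite /cM rmorphM /= scalar_mxM.
Qed.
HB.instance Definition _ := GRing.isZmodMorphism.Build Fq 'M[T]_2 cM cM_is_zmod.
HB.instance Definition _ := GRing.isMonoidMorphism.Build Fq 'M[T]_2 cM cM_is_monoid.

Definition Hm D a := (map_poly cM a).[Mx D].
Definition Delta D a : {poly K} := Hm D a ord0 ord_max.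

Lemma scalar_central (a : T) (A : 'M[T]_2) : (forall x : T, a * x = x * a) ->
  a%:M * A = A * a%:M.
Proof.
move=> ha; apply/matrixP => i j; rewrite -!mulmxE mul_scalar_mx !mxE.
rewrite (bigD1 j) //= big1 ?addr0 => [|k hk]; first by rewrite mxE eqxx mulr1n ha.
by rewrite mxE (negbTE hk) mulr0n mulr0.
Qed.

Lemma cM_central c (A : 'M[T]_2) : cM c * A = A * cM c.
Proof. by apply: scalar_central => x; apply: cT_central. Qed.

Lemma mx2_mul (A B : 'M[T]_2) i j :
  (A * B) i j = A i ord0 * B ord0 j + A i ord_max * B ord_max j.
Proof.
rewrite -mulmxE mxE big_ord_recl big_ord_recl big_ord0 addr0.
by have -> : lift ord0 ord0 = ord_max :> 'I_2 by apply: val_inj.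
Qed.

Lemma MxX D n :
  [/\ (Mx D ^+ n) ord0 ord0 = (psit : T) ^+ n,
      (Mx D ^+ n) ord_max ord0 = 0 &
      (Mx D ^+ n) ord_max ord_max = (phit : T) ^+ n].
Proof.
elim: n => [|n [h1 h2 h3]].
  by rewrite !expr0 !mxE /= !mulr1n.
by rewrite !exprS !mx2_mul h1 h2 h3 !mxE /= !mulr0 !mul0r !addr0 !add0r.
Qed.

Lemma cM_inj : injective cM.
Proof.
move=> x y /matrixP /(_ ord0 ord0); rewrite /cM /= !mxE /= !mulr1n.
exact: cT_inj.
Qed.

Lemma Hm_entry D a i j :
  Hm D a i j = \sum_(k < size a) cT a`_k * (Mx D ^+ k) i j.
Proof.
rewrite /Hm horner_coef size_map_inj_poly ?rmorph0 //; last exact: cM_inj.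
rewrite summxE; apply: eq_bigr => k _; rewrite coef_map /= -mulmxE mul_scalar_mx mxE //.
Qed.

Lemma Hm00 D a : Hm D a ord0 ord0 = dm iota0 psit a.
Proof.
rewrite Hm_entry dmE horner_coef size_map_inj_poly ?rmorph0 //; last exact: cT_inj.
by apply: eq_bigr => k _; rewrite coef_map; case: (MxX D k) => -> _ _.
Qed.

Lemma Hm11 D a : Hm D a ord_max ord_max = dm iota0 phit a.
Proof.
rewrite Hm_entry dmE horner_coef size_map_inj_poly ?rmorph0 //; last exact: cT_inj.
by apply: eq_bigr => k _; rewrite coef_map; case: (MxX D k) => _ _ ->.
Qed.

Lemma Hm_mul D a b : Hm D (a * b) = Hm D a * Hm D b.
Proof.
rewrite /Hm rmorphM hornerM_comm //; apply: comm_coef_poly => i.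
by rewrite coef_map /= cM_central.
Qed.

Lemma Delta_der D : is_der iota0 phit psit (Delta D).
Proof.
split.
- by move=> a b; rewrite /Delta /Hm rmorphD hornerD mxE.
- move=> c a; rewrite /Delta /Hm -mul_polyC rmorphM /= map_polyC hornerCM.
  by rewrite /cM /= -mulmxE mul_scalar_mx mxE -[_ * _]/(twmul fr _ _) twmulCl.
- move=> a b; rewrite /Delta Hm_mul mx2_mul Hm00 Hm11.
  by rewrite !taumulE.
Qed.

Lemma Delta_X D : Delta D 'X = D.
Proof. by rewrite /Delta /Hm map_polyX hornerX mxE. Qed.

Lemma der0 delta : is_der iota0 phit psit delta -> delta 0 = 0.
Proof.
case=> hD _ _; have h := hD 0 0; rewrite addr0 in h.
by apply: (addrI (delta 0)); rewrite addr0 -h.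
Qed.

Lemma der1 delta : is_der iota0 phit psit delta -> delta 1 = 0.
Proof.
case=> _ _ hM; have h := hM 1 1; rewrite mulr1 !dm1 !taumulE mul1r mulr1 in h.
by apply: (addrI (delta 1)); rewrite addr0 -h.
Qed.

Lemma der_unique d1 d2 : is_der iota0 phit psit d1 -> is_der iota0 phit psit d2 ->
  d1 'X = d2 'X -> forall a, d1 a = d2 a.
Proof.
move=> h1 h2 hX; elim/poly_ind => [|p c IH]; first by rewrite (der0 h1) (der0 h2).
have hc : forall d, is_der iota0 phit psit d -> d c%:P = 0.
  move=> d hd; rewrite -[c%:P]mulr1 mul_polyC; case: (hd) => _ hZ _.
  by rewrite hZ (der1 hd) scaler0.
have e1 := hc _ h1; have e2 := hc _ h2.
case: h1 => hD1 _ hM1; case: h2 => hD2 _ hM2.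
by rewrite hD1 hD2 hM1 hM2 IH hX e1 e2.
Qed.

Definition inner (U : {poly K}) a : {poly K} :=
  taumul Fq U (dm iota0 phit a) - taumul Fq (dm iota0 psit a) U.

Lemma inner_der U : is_der iota0 phit psit (inner U).
Proof.
split.
- move=> a b; rewrite /inner !dm_add !taumulE mulrDr mulrDl.
  rewrite opprD !addrA; congr (_ + _); rewrite -!addrA; congr (_ + _); by rewrite addrC.
- move=> c a; rewrite /inner !dm_scale !taumulE -(twmulCl fr) twE.
  rewrite -[(iota0 c)%:P]/(cT c).
  by rewrite mulrBr !mulrA (cT_central c U).
- move=> a b; rewrite /inner !dm_mul !taumulE.
  by rewrite mulrBr mulrBl !mulrA [RHS]addrC addrA subrK.
Qed.

Lemma inner_iff delta : is_der iota0 phit psit delta ->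
  (is_inner_der iota0 phit psit delta <->
   exists U, delta 'X = taumul Fq U phit - taumul Fq psit U).
Proof.
move=> hd; split.
  by case=> U hU; exists U; rewrite hU !dmX.
case=> U hU; exists U => a; rewrite -/(inner U a).
by apply: der_unique => //; [exact: inner_der | rewrite /inner !dmX].
Qed.

End Der2.

Section TwevalF.
Variable R : nzRingType.
Variable f : R -> R.
Lemma twevalF0 x : tweval f 0 x = 0.
Proof. by rewrite /tweval size_poly0 big_ord0. Qed.
Lemma twevalF1 x : tweval f 1 x = x.
Proof. by rewrite /tweval size_poly1 big_ord1 coefC /= mul1r. Qed.
End TwevalF.

Section Forms.
Variable K : fieldType.
Variable q : {rmorphism K -> K}.
Variable d : nat.

Lemma tweval_wide (p : {poly K}) x n : (size p <= n)%N ->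
  tweval q p x = \sum_(i < n) p`_i * iter i q x.
Proof.
move=> h; rewrite /tweval (big_ord_widen n (fun i => p`_i * iter i q x) h).
rewrite big_mkcond /=; apply: eq_bigr => i _.
by case: ltnP => // hi; rewrite nth_default ?mul0r.
Qed.

Lemma tweval_add p1 p2 x : tweval q (p1 + p2) x = tweval q p1 x + tweval q p2 x.
Proof.
pose n := maxn (size p1) (size p2).
rewrite !(@tweval_wide _ _ n) ?leq_maxl ?leq_maxr ?(leq_trans (size_polyD _ _)) //.
by rewrite -big_split; apply: eq_bigr => i _; rewrite coefD mulrDl.
Qed.

Lemma tweval_scale c p x : tweval q (c *: p) x = c * tweval q p x.
Proof.
rewrite !(@tweval_wide _ _ (size p)) ?size_scale_leq // mulr_sumr.
by apply: eq_bigr => i _; rewrite coefZ mulrA.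
Qed.

Lemma tweval_opp p x : tweval q (- p) x = - tweval q p x.
Proof. by rewrite -scaleN1r tweval_scale mulN1r. Qed.

Lemma tweval0 x : tweval q 0 x = 0.
Proof. by rewrite /tweval size_poly0 big_ord0. Qed.

Lemma tweval1 x : tweval q 1 x = x.
Proof. by rewrite /tweval size_poly1 big_ord1 coefC /= mul1r. Qed.

Lemma tweval_C c x : tweval q c%:P x = c * x.
Proof. by rewrite -[c%:P]mulr1 mul_polyC tweval_scale tweval1. Qed.

Lemma tweval_x0 p : tweval q p 0 = 0.
Proof. by rewrite /tweval big1 // => i _; rewrite (it0 q) mulr0. Qed.

Definition shiftq (j : nat) (p : {poly K}) : {poly K} :=
  'X^j * map_poly (iter j q) p.

Lemma tweval_shift j p x : tweval q (shiftq j p) x = iter j q (tweval q p x).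
Proof.
have h0 : iter j q 0 = 0 by rewrite (it0 q).
rewrite (@tweval_wide _ _ (j + size p)); last first.
  rewrite /shiftq (leq_trans (size_polyMleq _ _)) // size_polyXn /=.
  by rewrite leq_add2l /map_poly size_poly.
rewrite big_split_ord /= big1 ?add0r => [|i _]; last first.
  by rewrite /shiftq coefXnM /= ltn_ord mul0r.
rewrite /tweval (it_sum q); apply: eq_bigr => i _.
rewrite /shiftq coefXnM /= ltnNge leq_addr /= addKn coef_map_id0 //.
by rewrite (itM q) iterD.
Qed.

Lemma tweval_sum I (r : seq I) (P : pred I) (F : I -> {poly K}) x :
  tweval q (\sum_(i <- r | P i) F i) x = \sum_(i <- r | P i) tweval q (F i) x.
Proof.
elim: r => [|a r IH]; first by rewrite !big_nil tweval0.
by rewrite !big_cons; case: (P a); rewrite ?tweval_add IH.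
Qed.

Definition tform := 'rV[{poly K}]_d.
Definition fev (l : tform) (y : 'cV[K]_d) : K := \sum_j tweval q (l 0 j) (y j 0).
Definition fscale (c : K) (l : tform) : tform := \row_j (c *: l 0 j).
Definition fsig (j : nat) (l : tform) : tform := \row_k (shiftq j (l 0 k)).
Definition funit (i : nat) : tform := \row_(k < d) (if (k : nat) == i then 1 else 0).
Definition fcst (l : tform) : 'rV[K]_d := \row_j (l 0 j)`_0.

Lemma fev_add l1 l2 y : fev (l1 + l2) y = fev l1 y + fev l2 y.
Proof. by rewrite /fev -big_split; apply: eq_bigr => j _; rewrite mxE tweval_add. Qed.
Lemma fev_opp l y : fev (- l) y = - fev l y.
Proof. by rewrite /fev -sumrN; apply: eq_bigr => j _; rewrite mxE tweval_opp. Qed.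
Lemma fev_sub l1 l2 y : fev (l1 - l2) y = fev l1 y - fev l2 y.
Proof. by rewrite fev_add fev_opp. Qed.
Lemma fev0 y : fev 0 y = 0.
Proof. by rewrite /fev big1 // => j _; rewrite mxE tweval0. Qed.
Lemma fev_sum I (r : seq I) (P : pred I) (F : I -> tform) y :
  fev (\sum_(i <- r | P i) F i) y = \sum_(i <- r | P i) fev (F i) y.
Proof.
elim: r => [|a r IH]; first by rewrite !big_nil fev0.
by rewrite !big_cons; case: (P a); rewrite ?fev_add IH.
Qed.
Lemma fev_scale c l y : fev (fscale c l) y = c * fev l y.
Proof. by rewrite /fev mulr_sumr; apply: eq_bigr => j _; rewrite mxE tweval_scale. Qed.
Lemma fev_sig j l y : fev (fsig j l) y = iter j q (fev l y).
Proof. by rewrite /fev (it_sum q); apply: eq_bigr => k _; rewrite mxE tweval_shift. Qed.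
Lemma fev_unit i y : fev (funit i) y = \sum_(j < d | (j : nat) == i) y j 0.
Proof.
rewrite /fev [RHS]big_mkcond /=; apply: eq_bigr => j _; rewrite mxE.
by case: eqP => _; rewrite ?tweval1 ?tweval0.
Qed.

Lemma fscale0 l : fscale 0 l = 0.
Proof. by apply/rowP => j; rewrite !mxE scale0r. Qed.
Lemma fscalel0 c : fscale c 0 = 0.
Proof. by apply/rowP => j; rewrite !mxE scaler0. Qed.
Lemma fsig0 j : fsig j 0 = 0.
Proof. by apply/rowP => k; rewrite !mxE /shiftq map_poly0 mulr0. Qed.
Lemma funit_out i : (d <= i)%N -> funit i = 0.
Proof.
move=> h; apply/rowP => k; rewrite !mxE; case: eqP => // e.
by have := ltn_ord k; rewrite e ltnNge h.
Qed.

Lemma fcst_add l1 l2 : fcst (l1 + l2) = fcst l1 + fcst l2.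
Proof. by apply/rowP => j; rewrite !mxE coefD. Qed.
Lemma fcst_opp l : fcst (- l) = - fcst l.
Proof. by apply/rowP => j; rewrite !mxE coefN. Qed.
Lemma fcst0 : fcst 0 = 0.
Proof. by apply/rowP => j; rewrite !mxE coef0. Qed.
Lemma fcst_sum I (r : seq I) (P : pred I) (F : I -> tform) :
  fcst (\sum_(i <- r | P i) F i) = \sum_(i <- r | P i) fcst (F i).
Proof.
elim: r => [|a r IH]; first by rewrite !big_nil fcst0.
by rewrite !big_cons; case: (P a); rewrite ?fcst_add IH.
Qed.
Lemma fcst_scale c l : fcst (fscale c l) = c *: fcst l.
Proof. by apply/rowP => j; rewrite !mxE coefZ. Qed.
Lemma fcst_sig j l : fcst (fsig j l) = if j == 0%N then fcst l else 0.
Proof.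
apply/rowP => k; rewrite !mxE /shiftq coefXnM.
case: j => [|j] /=; last by rewrite mxE.
by rewrite coef_map_id0 // mxE.
Qed.
Lemma fcst_unit i : fcst (funit i) = \row_(k < d) (if (k : nat) == i then 1 else 0).
Proof. by apply/rowP => k; rewrite !mxE; case: eqP; rewrite ?coefC. Qed.

End Forms.

Section NF.
Variables (Fq : finFieldType) (K : fieldType) (iota0 : {rmorphism Fq -> K}).
Variable theta : K.
Variable qroot : K -> K.
Hypothesis Hq1 : forall x : K, qroot x ^+ qq Fq = x.
Hypothesis Hq2 : forall x : K, qroot (x ^+ qq Fq) = x.
Variables phit psit : {poly K}.
Hypothesis Hphi : is_drinfeld theta phit.
Hypothesis Hpsi : is_drinfeld theta psit.
Hypothesis Hrk : (drank phit < drank psit)%N.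

Local Notation fr := (@frobR Fq K iota0).
Local Notation T := (@tw K fr).
Local Notation r := (drank phit).
Local Notation s := (drank psit).
Local Notation b := (psit`_s).

Lemma size_phi : (size phit <= s)%N.
Proof. move: Hrk; rewrite /drank; lia. Qed.
Lemma size_psi : size psit = s.+1.
Proof. move: Hrk; rewrite /drank; lia. Qed.
Lemma b_neq0 : b != 0.
Proof.
have : psit != 0 by rewrite -size_poly_gt0 size_psi.
by rewrite -lead_coef_eq0 lead_coefE.
Qed.

Lemma frob_inj : injective (frobq Fq (K:=K)).
Proof. by move=> x y h; rewrite -[x]Hq2 -[y]Hq2; congr qroot. Qed.
Lemma frob_qroot x : frobq Fq (qroot x) = x.
Proof. exact: Hq1. Qed.
Lemma qroot_frob x : qroot (frobq Fq x) = x.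
Proof. exact: Hq2. Qed.

Lemma qroot_is_zmod : zmod_morphism qroot.
Proof.
move=> x y; apply: frob_inj.
by rewrite (rmorphB fr) /= !frob_qroot.
Qed.
Lemma qroot_is_monoid : monoid_morphism qroot.
Proof.
split; first by apply: frob_inj; rewrite frob_qroot (rmorph1 fr).
by move=> x y; apply: frob_inj; rewrite (rmorphM fr) /= !frob_qroot.
Qed.
HB.instance Definition _ := GRing.isZmodMorphism.Build K K qroot qroot_is_zmod.
HB.instance Definition _ := GRing.isMonoidMorphism.Build K K qroot qroot_is_monoid.
Definition qR : {rmorphism K -> K} := qroot.

Lemma it_frob_qroot n x : iter n fr (iter n qroot x) = x.
Proof.
elim: n x => [|n IH] x //.
by rewrite iterSr iterS [fr _]frob_qroot IH.
Qed.

Lemma it_qroot_frob n x : iter n qroot (iter n fr x) = x.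
Proof.
elim: n x => [|n IH] x //.
by rewrite iterSr iterS [qroot _]qroot_frob IH.
Qed.

Lemma it_fr_qroot k m x : (m <= k)%N ->
  iter k fr (iter (k - m) qroot x) = iter m fr x.
Proof.
move=> hmk; by rewrite -{1}(subnKC hmk) iterD it_frob_qroot.
Qed.

Lemma tmE (f g : {poly K}) : taumul Fq f g = ((f : T) * (g : T) : T).
Proof. by []. Qed.

Definition inM (N : {poly K}) :=
  exists U : {poly K}, N = taumul Fq U phit - taumul Fq psit U.

Lemma inM0 : inM 0.
Proof. by exists 0; rewrite !tmE mul0r mulr0 subrr. Qed.

Lemma inMB N1 N2 : inM N1 -> inM N2 -> inM (N1 - N2).
Proof.
case=> U1 ->; case=> U2 ->; exists (U1 - U2).
rewrite !tmE; rewrite -[U1 - U2]/((U1 : T) - U2) mulrBl mulrBr.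
rewrite [in LHS]opprB; exact: zmod4.
Qed.

Lemma inMD N1 N2 : inM N1 -> inM N2 -> inM (N1 + N2).
Proof.
move=> h1 h2; rewrite -[N2]opprK; apply: inMB => //.
by rewrite -sub0r; apply: inMB => //; exact: inM0.
Qed.

Lemma inM_psi N : inM N -> inM (taumul Fq psit N).
Proof.
case=> U ->; exists (taumul Fq psit U); rewrite !tmE.
by rewrite mulrBr !mulrA.
Qed.

Lemma inM_trans D : inM (taumul Fq D phit - taumul Fq psit D).
Proof. by exists D. Qed.

Lemma inM_coef0 N : inM N -> N`_0 = 0.
Proof.
case=> U ->; rewrite coefB !(coef_twmul fr) !big_ord1 /= Hphi.
rewrite (_ : psit`_0 = theta) //= mulrC subrr //.
Qed.


Lemma nf_ex (D : {poly K}) : exists N : {poly K}, (size N <= s)%N /\ inM (D - N).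
Proof.
move: {2}(size D) (leqnn (size D)) => n hD; elim: n D hD => [|n IH] D hD.
  by exists D; split; [lia | rewrite subrr; exact: inM0].
case: (leqP (size D) s) => hs.
  by exists D; split => //; rewrite subrr; exact: inM0.
have hns : (s <= n)%N by lia.
pose m := (n - s)%N.
have hnm : n = (s + m)%N by rewrite /m; lia.
pose u := iter s qroot (D`_n / b).
pose U : {poly K} := u *: 'X^m.
have hU : (size U <= m.+1)%N by rewrite /U (leq_trans (size_scale_leq _ _)) // size_polyXn.
have hUm : U`_m = u by rewrite /U coefZ coefXn eqxx mulr1.
pose D' := D + (taumul Fq U phit - taumul Fq psit U).
have hD' : (size D' <= n)%N.
  apply/leq_sizeP => j hj; rewrite /D' coefD coefB.
  have h1 : (taumul Fq U phit)`_j = 0.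
    apply: nth_default; apply: (leq_trans (size_twmul fr _ _)).
    move: hU size_phi hj; lia.
  rewrite h1 sub0r.
  case: (ltnP n j) => hnj.
    rewrite nth_default; last exact: (leq_trans hD).
    rewrite nth_default ?subr0 ?add0r //.
    apply: (leq_trans (size_twmul fr _ _)); rewrite size_psi; move: hU; lia.
  have -> : j = n by lia.
  rewrite hnm (coef_top fr) ?size_psi // hUm.
  rewrite it_frob_qroot mulrC divfK ?b_neq0 // -hnm.
  by rewrite subrr.
have [N [hN hM]] := IH D' hD'.
exists N; split => //.
have -> : D - N = (D' - N) - (taumul Fq U phit - taumul Fq psit U).
  by rewrite /D' addrAC addrK.
by apply: inMB => //; exact: inM_trans.
Qed.

Lemma inM_small (N : {poly K}) : inM N -> (size N <= s)%N -> N = 0.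
Proof.
case=> U ->{N} hs.
have [->|hU] := eqVneq U 0; first by rewrite !tmE mul0r mulr0 subrr.
pose m := (size U).-1.
have hUs : size U = m.+1 := polySpred hU.
have : (taumul Fq U phit - taumul Fq psit U)`_(s + m) = 0.
  by rewrite nth_default //; apply: (leq_trans hs); exact: leq_addr.
rewrite coefB (nth_default 0 (_ : size (taumul Fq U phit) <= s + m)%N); last first.
  apply: (leq_trans (size_twmul fr _ _)); rewrite hUs; move: size_phi; lia.
rewrite (@coef_top _ fr psit U s m) ?size_psi ?hUs //.
rewrite sub0r => /eqP; rewrite oppr_eq0 mulf_eq0 (negbTE b_neq0) /= (itfr_eq0 fr).
by rewrite -lead_coefE lead_coef_eq0 (negbTE hU).
Qed.

Definition NF (D : {poly K}) : {poly K} :=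
  proj1_sig (constructive_indefinite_description _ (nf_ex D)).

Lemma NFP (D : {poly K}) : (size (NF D) <= s)%N /\ inM (D - NF D).
Proof. exact: (proj2_sig (constructive_indefinite_description _ (nf_ex D))). Qed.

Lemma NF_uniq (D N : {poly K}) : (size N <= s)%N -> inM (D - N) -> NF D = N.
Proof.
move=> hN hM; case: (NFP D) => h1 h2.
apply/eqP; rewrite -subr_eq0; apply/eqP; apply: inM_small.
  have -> : NF D - N = (D - N) - (D - NF D) by rewrite opprB [RHS]addrC addrA subrK.
  exact: inMB.
apply: (leq_trans (size_polyD _ _)); rewrite size_polyN geq_max h1 hN //.
Qed.

Lemma NF_add (D1 D2 : {poly K}) : NF (D1 + D2) = NF D1 + NF D2.
Proof.
case: (NFP D1) => a1 b1; case: (NFP D2) => a2 b2.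
apply: NF_uniq.
  apply: (leq_trans (size_polyD _ _)); rewrite geq_max a1 a2 //.
have -> : D1 + D2 - (NF D1 + NF D2) = (D1 - NF D1) + (D2 - NF D2).
  by rewrite opprD addrACA.
exact: inMD.
Qed.

Lemma NF_small (D : {poly K}) : (size D <= s)%N -> NF D = D.
Proof. by move=> h; apply: NF_uniq => //; rewrite subrr; exact: inM0. Qed.

Lemma NF_coef0 (D : {poly K}) : (NF D)`_0 = D`_0.
Proof.
case: (NFP D) => _ /inM_coef0; rewrite coefB => /eqP; rewrite subr_eq0 => /eqP //.
Qed.

Local Notation d := (s.-1).+1.
Lemma sd : s = d.
Proof. move: Hrk; lia. Qed.

Local Notation frm := (@tform K d).

Definition F0 (k : nat) : frm :=
  \sum_(i < k.+1) fsig qR (k - i) (fscale phit`_(k - i) (funit K d i)).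

Definition wform m (F : nat -> frm) : frm :=
  fscale (iter (s + m) qroot b)^-1 (F (s + m)%N).

Definition step m (F : nat -> frm) (k : nat) : frm :=
  if k == (s + m)%N then 0 else
  F k + (if (m <= k)%N then fsig qR (k - m) (fscale phit`_(k - m) (wform m F)) else 0)
      - (if (m <= k)%N then fscale (iter k qroot psit`_(k - m)) (wform m F) else 0).

Fixpoint red (l : nat) (F : nat -> frm) : nat -> frm :=
  match l with 0%N => F | l'.+1 => red l' (step l' F) end.

Definition Fin := red r F0.

Definition Rel (F : nat -> frm) (y : 'cV[K]_d) (P : {poly K}) :=
  forall k, P`_k = iter k fr (fev qR (F k) y).

Definition Dy (y : 'cV[K]_d) : {poly K} := \poly_(k < d) iter k fr (y (inord k) 0).

Lemma fev_unit' i y : fev qR (funit K d i) y = if (i < d)%N then y (inord i) 0 else 0.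
Proof.
rewrite fev_unit (eq_bigr (fun j : 'I_d => y (inord j) 0)) => [|j _]; last by rewrite inord_val.
exact: (big_ord1_eq _ (fun j => y (inord j) 0)).
Qed.

Lemma Rel_F0 y : Rel F0 y (taumul Fq (Dy y) phit).
Proof.
move=> k; rewrite (coef_twmul fr) /F0 fev_sum (it_sum fr); apply: eq_bigr => i _.
rewrite fev_sig fev_scale fev_unit' it_fr_qroot; last by have := ltn_ord i; lia.
rewrite /Dy coef_poly; case: ltnP => _; last by rewrite mul0r mulr0 (it0 fr).
by rewrite (itM fr) mulrC.
Qed.

Lemma Rel_step m F y P : Rel F y P ->
  Rel (step m F) y (P + (taumul Fq (iter m fr (fev qR (wform m F) y) *: 'X^m) phit
                         - taumul Fq psit (iter m fr (fev qR (wform m F) y) *: 'X^m))).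
Proof.
move=> hP k; rewrite coefD coefB (coef_twmul_monoL fr) (coef_twmul_monoR fr) hP.
rewrite /step; case: eqP => [->|hk].
  rewrite leq_addl addnK fev0 (it0 fr).
  rewrite (nth_default 0 (_ : size phit <= s)%N) ?size_phi // (it0 fr) mulr0 sub0r.
  rewrite -iterD /wform fev_scale (itM fr) (itV fr) it_frob_qroot mulrA mulfV ?b_neq0 //.
  by rewrite mul1r subrr.
case: (leqP m k) => hmk; last by rewrite !subr0 !addr0.
rewrite fev_sub fev_add fev_sig fev_scale fev_scale (itB fr) (itD fr).
rewrite it_fr_qroot // (itM fr) (itM fr) it_frob_qroot.
by rewrite itA subnK // addrA [iter m fr (fev _ _ _) * _]mulrC.
Qed.

Lemma red_rel l F y P : Rel F y P -> exists N, inM N /\ Rel (red l F) y (P + N).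
Proof.
elim: l F P => [|l IH] F P hP /=.
  by exists 0; split; [exact: inM0 | rewrite addr0].
have [N [hN hR]] := IH _ _ (Rel_step l hP).
exists ((taumul Fq (iter l fr (fev qR (wform l F) y) *: 'X^l) phit
         - taumul Fq psit (iter l fr (fev qR (wform l F) y) *: 'X^l)) + N).
by split; [apply: inMD => //; exact: inM_trans | rewrite addrA].
Qed.

Definition supp (F : nat -> frm) (n : nat) := forall k, (n <= k)%N -> F k = 0.

Lemma supp_F0 : supp F0 (s + r).
Proof.
move=> k hk; rewrite /F0 big1 // => i _.
case: (ltnP i d) => hi; last by rewrite funit_out // fscalel0 fsig0.
rewrite nth_default ?fscale0 ?fsig0 //.
have hr : (size phit <= r.+1)%N by rewrite /drank; lia.
apply: (leq_trans hr); have := ltn_ord i; have := sd; move: hk hi; lia.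
Qed.

Lemma supp_step m F : supp F (s + m).+1 -> supp (step m F) (s + m).
Proof.
move=> hF k hk; rewrite /step; case: eqP => // hne.
have hk' : (s + m < k)%N by lia.
have hm : (m <= k)%N by lia.
rewrite hF // hm (nth_default 0 (_ : size phit <= k - m)%N); last first.
  by apply: (leq_trans size_phi); lia.
rewrite (nth_default 0 (_ : size psit <= k - m)%N); last by rewrite size_psi; lia.
by rewrite (it0 qR) !fscale0 fsig0 add0r subrr.
Qed.

Lemma supp_red l F : supp F (s + l) -> supp (red l F) s.
Proof.
elim: l F => [|l IH] F hF /=; first by move: hF; rewrite addn0.
by apply: IH; apply: supp_step; rewrite -addnS.
Qed.

Lemma supp_Fin : supp Fin s.
Proof. exact: supp_red supp_F0. Qed.

Lemma cst_step m F : fcst (F (s + m)%N) = 0 ->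
  forall k, fcst (step m F k) = fcst (F k).
Proof.
move=> h0 k; rewrite /step; case: eqP => [->|_]; first by rewrite fcst0 h0.
have hw : fcst (wform m F) = 0 by rewrite /wform fcst_scale h0 scaler0.
rewrite fcst_add fcst_opp fcst_add.
have -> : fcst (if (m <= k)%N then fsig qR (k - m) (fscale phit`_(k - m) (wform m F)) else 0) = 0.
  by case: ifP; rewrite ?fcst0 // fcst_sig fcst_scale hw scaler0; case: eqP.
have -> : fcst (if (m <= k)%N then fscale (iter k qroot psit`_(k - m)) (wform m F) else 0) = 0.
  by case: ifP; rewrite ?fcst0 // fcst_scale hw scaler0.
by rewrite addr0 subr0.
Qed.

Lemma cst_red l F : (forall k, (s <= k)%N -> fcst (F k) = 0) ->
  forall k, fcst (red l F k) = fcst (F k).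
Proof.
elim: l F => [|l IH] F hF k //=.
have hs := cst_step (hF _ (leq_addr l s)).
rewrite IH ?hs // => k' hk'; rewrite hs; exact: hF.
Qed.

Lemma cst_F0 k : fcst (F0 k) = theta *: \row_(j < d) (if (j : nat) == k then 1 else 0).
Proof.
rewrite /F0 fcst_sum big_ord_recr /= subnn fcst_sig eqxx fcst_scale fcst_unit.
rewrite big1 ?add0r; first by rewrite Hphi.
move=> i _; rewrite fcst_sig; case: eqP => // h; have := ltn_ord i; lia.
Qed.

Lemma cst_Fin k : fcst (Fin k) = theta *: \row_(j < d) (if (j : nat) == k then 1 else 0).
Proof.
rewrite /Fin cst_red ?cst_F0 // => k' hk'; rewrite cst_F0.
apply/rowP => j; rewrite !mxE; case: eqP => [e|_]; last by rewrite mulr0.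
by have := ltn_ord j; rewrite e -sd ltnNge hk'.
Qed.

Lemma NF_eqM A B : inM (A - B) -> NF A = NF B.
Proof.
move=> h; case: (NFP B) => h1 h2; apply: NF_uniq => //.
have -> : A - NF B = (A - B) + (B - NF B) by rewrite addrA subrK.
exact: inMD.
Qed.

Lemma NF_Fin y k : (k < d)%N ->
  iter k qroot ((NF (taumul Fq (Dy y) phit))`_k) = fev qR (Fin k) y.
Proof.
move=> hk; have [N [hN hR]] := red_rel r (Rel_F0 y).
have -> : NF (taumul Fq (Dy y) phit) = taumul Fq (Dy y) phit + N.
  apply: NF_uniq.
    apply/leq_sizeP => j hj; rewrite hR -/Fin supp_Fin // fev0 (it0 fr) //.
  by rewrite opprD addrA subrr sub0r -sub0r; apply: inMB => //; exact: inM0.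
by rewrite hR it_qroot_frob.
Qed.

Definition piD (D : {poly K}) : 'cV[K]_d := \col_k iter k qroot ((NF D)`_k).

Lemma Dy_piD D : Dy (piD D) = NF D.
Proof.
apply/polyP => k; rewrite coef_poly; case: ltnP => hk.
  by rewrite mxE inordK // it_frob_qroot.
by rewrite nth_default //; case: (NFP D) => h _; rewrite (leq_trans h) // sd.
Qed.

Lemma piD_Dy y : piD (Dy y) = y.
Proof.
rewrite /piD NF_small; last by rewrite sd; exact: size_poly.
apply/colP => k; rewrite !mxE coef_poly ltn_ord it_qroot_frob inord_val //.
Qed.

Lemma piD_add D1 D2 : piD (D1 + D2) = piD D1 + piD D2.
Proof. by apply/colP => k; rewrite !mxE NF_add coefD (itD qR). Qed.

Lemma it_qroot_iota k c : iter k qroot (iota0 c) = iota0 c.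
Proof.
elim: k => //= k ->.
by rewrite -{1}(frob_iota iota0 c) qroot_frob.
Qed.

Lemma inM_scale c N : inM N -> inM (iota0 c *: N).
Proof.
case=> U ->; exists (iota0 c *: U).
rewrite -!(twmulCl fr) !tmE.
rewrite -[(iota0 c)%:P]/(cT iota0 c).
rewrite !twE. by rewrite mulrBr !mulrA -(@cT_central Fq K iota0 c psit).
Qed.

Lemma piD_scale c D : piD (iota0 c *: D) = iota0 c *: piD D.
Proof.
suff : NF (iota0 c *: D) = iota0 c *: NF D.
  move=> e; apply/colP => k; rewrite !mxE e coefZ (itM qR) /= it_qroot_iota //.
apply: NF_uniq; first by rewrite (leq_trans (size_scale_leq _ _)) //; case: (NFP D).
by rewrite -scalerBr; apply: inM_scale; case: (NFP D).
Qed.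

Lemma piD_ker D : piD D = 0 <-> inM D.
Proof.
split => [h|h].
  have e : NF D = 0.
    by rewrite -Dy_piD h; apply/polyP => k; rewrite coef_poly mxE (it0 fr) coef0; case: ifP.
  by case: (NFP D); rewrite e subr0.
have e : NF D = 0 by apply: NF_uniq; rewrite ?size_poly0 ?subr0.
by apply/colP => k; rewrite !mxE e coef0 (it0 qR).
Qed.

Lemma piD_0 D : piD D ord0 0 = D`_0.
Proof. by rewrite mxE NF_coef0. Qed.


Local Notation n0 := (s.-1).

Definition Phi : 'M[{poly K}]_d := \matrix_(i, j)
  if (i : nat) == 0%N then (if (j : nat) == 0%N then theta%:P else 0) else Fin i 0 j.

Lemma Phi_cst (i j : 'I_d) : (Phi i j)`_0 = theta *+ (i == j).
Proof.
rewrite mxE; case: eqP => hi.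
  case: eqP => hj; first by rewrite coefC /= (_ : i == j) // -val_eqE /= hi hj.
  by rewrite coef0 (_ : (i == j) = false) // -val_eqE /= hi; apply/eqP => e; apply: hj.
have := cst_Fin i; move/rowP/(_ j); rewrite !mxE => ->.
by rewrite -val_eqE /= eq_sym; case: eqP; rewrite ?mulr1 ?mulr0.
Qed.

Lemma tact D : piD (taumul Fq psit D) = twmxeval qroot Phi (piD D).
Proof.
have e : NF (taumul Fq psit D) = NF (taumul Fq (Dy (piD D)) phit).
  apply: NF_eqM; rewrite Dy_piD.
  have -> : taumul Fq psit D - taumul Fq (NF D) phit =
            taumul Fq psit (D - NF D) - (taumul Fq (NF D) phit - taumul Fq psit (NF D)).
    by rewrite !tmE mulrBr opprB addrA subrK.
  by apply: inMB; [apply: inM_psi; case: (NFP D) | exact: inM_trans].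
apply/colP => k; rewrite !mxE; case: (unliftP ord0 k) => [k' ->|->].
  rewrite e (NF_Fin _ (ltn_ord (lift ord0 k'))) /fev; apply: eq_bigr => j _.
  by rewrite [Phi _ _]mxE lift0.
rewrite /= NF_coef0 big_ord_recl big1 ?addr0 => [|j _]; last by rewrite mxE /= twevalF0.
rewrite mxE /= tweval_C (coef_twmul fr) big_ord1 /= Hpsi mxE /= NF_coef0.
done.
Qed.

Definition Phi0 : 'M[{poly K}]_n0 := \matrix_(i, j) Phi (lift ord0 i) (lift ord0 j).
Definition fM : 'M[{poly K}]_(d, n0) := \matrix_(i, j) if (i : nat) == j.+1 then 1 else 0.
Definition gM : 'M[{poly K}]_(1, d) := \matrix_(i, j) if (j : nat) == 0%N then 1 else 0.
Definition pi (delta : {poly Fq} -> {poly K}) : 'cV[K]_d := piD (delta 'X).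
Definition pi0 (delta : {poly Fq} -> {poly K}) : 'cV[K]_n0 := \col_k pi delta (lift ord0 k) 0.


Lemma Phi_mod : is_tsigma_module theta Phi.
Proof.
exists 1%N; rewrite expr1; apply/matrixP => i j; rewrite !mxE.
by have := Phi_cst i j; rewrite mxE => ->; rewrite subrr.
Qed.

Lemma Phi0_mod : is_tsigma_module theta Phi0.
Proof.
exists 1%N; rewrite expr1; apply/matrixP => i j; rewrite !mxE.
have := Phi_cst (lift ord0 i) (lift ord0 j); rewrite mxE => ->.
by rewrite (inj_eq (@lift_inj _ ord0)) subrr.
Qed.

Lemma twq1l p : twmul qroot 1 p = p. Proof. exact: (twmul1l qR). Qed.
Lemma twq1r p : twmul qroot p 1 = p. Proof. exact: (twmul1r qR). Qed.
Lemma twq0l p : twmul qroot 0 p = 0. Proof. exact: (twmul0l qR). Qed.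
Lemma twq0r p : twmul qroot p 0 = 0. Proof. exact: (twmul0r qR). Qed.

Lemma Phi0_row (j : 'I_d) : (j : nat) != 0%N -> Phi ord0 j = 0.
Proof. by move=> hj; rewrite mxE /= (negbTE hj). Qed.

Lemma morph_f : is_tsigma_morphism qroot Phi0 Phi fM.
Proof.
apply/matrixP => i k; rewrite /twmx mxE [RHS]mxE.
rewrite [RHS](bigD1 (lift ord0 k)) //= [X in _ = _ + X]big1 => [|l hl]; last first.
  rewrite [fM _ _]mxE; case: eqP => [e|_]; last exact: twq0r.
  by case/eqP: hl; apply: ord_inj; rewrite lift0 e.
rewrite [fM _ _]mxE lift0 eqxx twq1r addr0.
case: (unliftP ord0 i) => [i' ->|->].
  rewrite (bigD1 i') //= big1 => [|l hl]; last first.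
    rewrite [fM _ _]mxE lift0 eqSS; case: eqP => [e|_]; last exact: twq0l.
    by case/eqP: hl; apply: val_inj.
  by rewrite [fM _ _]mxE lift0 eqxx twq1l addr0 mxE.
rewrite big1 => [|l _]; last by rewrite [fM _ _]mxE /= twq0l.
by rewrite Phi0_row // lift0.
Qed.

Lemma morph_g : is_tsigma_morphism qroot Phi (Ga_t theta) gM.
Proof.
apply/matrixP => i k; rewrite !mxE (ord1 i) big_ord1 !mxE.
rewrite (twmulCl qR) big_ord_recl big1 => [|l _]; last first.
  by rewrite mxE /= twq0l.
rewrite mxE /= twq1l addr0 mxE /=.
by case: eqP => _; rewrite ?scaler0 // -[theta%:P]mulr1 mul_polyC.
Qed.

Lemma fM_eval (L : fieldType) (j : {rmorphism K -> L}) (qL : L -> L) (z : 'cV[L]_n0) :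
  twmxeval qL (map_mx (map_poly j) fM) z =
  \col_i (if unlift ord0 i is Some k then z k 0 else 0).
Proof.
apply/colP => i; rewrite !mxE.
case: (unliftP ord0 i) => [i' ->|->].
  rewrite (bigD1 i') //= big1 => [|l hl]; last first.
    rewrite !mxE lift0 eqSS; case: eqP => [e|_]; first by case/eqP: hl; apply: val_inj.
    by rewrite rmorph0 twevalF0.
  by rewrite !mxE lift0 eqxx rmorph1 twevalF1 addr0.
rewrite big1 ?unlift_none // => l _; rewrite !mxE /= rmorph0 twevalF0 //.
Qed.

Lemma gM_eval (L : fieldType) (j : {rmorphism K -> L}) (qL : L -> L) (x : 'cV[L]_d) :
  twmxeval qL (map_mx (map_poly j) gM) x = \col_i x ord0 0.
Proof.
apply/colP => i; rewrite !mxE big_ord_recl big1 => [|l _]; last first.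
  by rewrite !mxE /= rmorph0 twevalF0.
by rewrite !mxE /= rmorph1 twevalF1 addr0.
Qed.

Lemma exactness (L : closedFieldType) (j : {rmorphism K -> L}) (qL : L -> L) :
  exact_over j qL fM gM.
Proof.
rewrite /exact_over; split.
- move=> z1 z2; rewrite !fM_eval => /colP h; apply/colP => k.
  by have := h (lift ord0 k); rewrite !mxE liftK.
- move=> y; exists (const_mx (y 0 0)); rewrite gM_eval.
  by apply/colP => i; rewrite !mxE (ord1 i).
- move=> x; rewrite gM_eval; split.
    move/colP/(_ ord0); rewrite !mxE => h0.
    exists (\col_k x (lift ord0 k) 0); rewrite fM_eval; apply/colP => i; rewrite !mxE.
    by case: (unliftP ord0 i) => [i' ->|->]; rewrite ?liftK ?unlift_none ?mxE.
  by case=> z <-; rewrite fM_eval; apply/colP => i; rewrite !mxE unlift_none.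
Qed.


Local Notation DD D := (@Delta Fq K iota0 phit psit D).

Lemma fM_evalK (z : 'cV[K]_n0) :
  twmxeval qroot fM z = \col_i (if unlift ord0 i is Some k then z k 0 else 0).
Proof.
apply/colP => i; rewrite !mxE.
case: (unliftP ord0 i) => [i' ->|->].
  rewrite (bigD1 i') //= big1 => [|l hl]; last first.
    rewrite !mxE lift0 eqSS; case: eqP => [e|_]; first by case/eqP: hl; apply: val_inj.
    by rewrite twevalF0.
  by rewrite !mxE lift0 eqxx twevalF1 addr0.
rewrite big1 ?unlift_none // => l _; rewrite !mxE /= twevalF0 //.
Qed.

Lemma pres_pi : presents iota0 qroot phit psit (is_der iota0 phit psit) Phi pi.
Proof.
split.
- by move=> d1 d2 _ _; exact: piD_add.
- by move=> c delta _; exact: piD_scale.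
- by move=> delta _; exact: tact.
- move=> y; exists (DD (Dy y)); first exact: Delta_der.
  by rewrite /pi Delta_X piD_Dy.
- move=> delta hd; rewrite (inner_iff hd) /pi piD_ker //.
Qed.

Lemma pi0_iff (delta : {poly Fq} -> {poly K}) : (delta 'X)`_0 = 0 -> (pi0 delta = 0 <-> pi delta = 0).
Proof.
move=> h0; split => h; last by apply/colP => i; rewrite mxE h !mxE.
apply/colP => i; rewrite [RHS]mxE.
case: (unliftP ord0 i) => [i' ->|->].
  by move/colP: h => /(_ i'); rewrite !mxE.
by rewrite /pi piD_0 h0.
Qed.

Lemma pres_pi0 : presents iota0 qroot phit psit (is_der0 iota0 phit psit) Phi0 pi0.
Proof.
split.
- by move=> d1 d2 _ _; apply/colP => k; rewrite /pi0 /pi /der_add piD_add !mxE.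
- by move=> c delta _; apply/colP => k; rewrite /pi0 /pi /der_scale piD_scale !mxE.
- move=> delta [_ h0]; apply/colP => k; rewrite mxE [RHS]mxE /pi /der_tact tact mxE.
  rewrite big_ord_recl piD_0 h0 (tweval_x0 qR) add0r; apply: eq_bigr => j _.
  by rewrite !mxE.
- move=> x; pose y : 'cV[K]_d := \col_i (if unlift ord0 i is Some k then x k 0 else 0).
  exists (DD (Dy y)).
    split; first exact: Delta_der.
    rewrite Delta_X coef_poly /= mxE.
    by rewrite (_ : inord 0 = ord0) ?unlift_none //; apply: val_inj; rewrite /= inordK.
  by apply/colP => k; rewrite /pi0 /pi Delta_X piD_Dy !mxE liftK.
- move=> delta [hd h0]; rewrite pi0_iff //; case: pres_pi => _ _ _ _ h; exact: h.
Qed.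

Lemma final_eq (delta : {poly Fq} -> {poly K}) : is_der0 iota0 phit psit delta ->
  twmxeval qroot fM (pi0 delta) = pi delta.
Proof.
case=> _ h0; rewrite fM_evalK; apply/colP => i; rewrite !mxE.
by case: (unliftP ord0 i) => [i' ->|->]; rewrite ?liftK ?unlift_none ?mxE // /= NF_coef0 h0.
Qed.


Lemma main_result :
  exists (d0 d' : nat)
         (Phi0' : 'M[{poly K}]_d0) (Phi' : 'M[{poly K}]_d')
         (f : 'M[{poly K}]_(d', d0)) (g : 'M[{poly K}]_(1, d'))
         (pi0' : ({poly Fq} -> {poly K}) -> 'cV[K]_d0)
         (pi' : ({poly Fq} -> {poly K}) -> 'cV[K]_d'),
    [/\ is_tsigma_module theta Phi0' /\ is_tsigma_module theta Phi',
        is_tsigma_morphism qroot Phi0' Phi' f /\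
        is_tsigma_morphism qroot Phi' (Ga_t theta) g,
        (forall (L : closedFieldType) (j : {rmorphism K -> L})
                (qrootL : L -> L),
            (forall y : L, qrootL y ^+ qq Fq = y) ->
            exact_over j qrootL f g),
        presents iota0 qroot phit psit (is_der0 iota0 phit psit) Phi0' pi0' /\
        presents iota0 qroot phit psit (is_der iota0 phit psit) Phi' pi' &
        forall delta, is_der0 iota0 phit psit delta ->
          twmxeval qroot f (pi0' delta) = pi' delta].
Proof.
exists n0, d, Phi0, Phi, fM, gM, pi0, pi; split.
- by split; [exact: Phi0_mod | exact: Phi_mod].
- by split; [exact: morph_f | exact: morph_g].
- by move=> L j qL _; exact: exactness.
- by split; [exact: pres_pi0 | exact: pres_pi].
- exact: final_eq.
Qed.
End NF.

End Helpers.

Theorem theorem7p5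
  (Fq : finFieldType) (K : fieldType) (iota0 : {rmorphism Fq -> K})
  (theta : K)
  (qroot : K -> K)
  (Hqroot1 : forall x : K, qroot x ^+ qq Fq = x)
  (Hqroot2 : forall x : K, qroot (x ^+ qq Fq) = x)
  (phit psit : {poly K})
  (Hphi : is_drinfeld theta phit) (Hpsi : is_drinfeld theta psit)
  (Hrk : (drank phit < drank psit)%N) :
  exists (d0 d : nat)
         (Phi0 : 'M[{poly K}]_d0) (Phi : 'M[{poly K}]_d)
         (f : 'M[{poly K}]_(d, d0)) (g : 'M[{poly K}]_(1, d))
         (pi0 : ({poly Fq} -> {poly K}) -> 'cV[K]_d0)
         (pi : ({poly Fq} -> {poly K}) -> 'cV[K]_d),
    [/\ is_tsigma_module theta Phi0 /\ is_tsigma_module theta Phi,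
        is_tsigma_morphism qroot Phi0 Phi f /\
        is_tsigma_morphism qroot Phi (Ga_t theta) g,
        (forall (L : closedFieldType) (j : {rmorphism K -> L})
                (qrootL : L -> L),
            (forall y : L, qrootL y ^+ qq Fq = y) ->
            exact_over j qrootL f g),
        presents iota0 qroot phit psit (is_der0 iota0 phit psit) Phi0 pi0 /\
        presents iota0 qroot phit psit (is_der iota0 phit psit) Phi pi &
        forall delta, is_der0 iota0 phit psit delta ->
          twmxeval qroot f (pi0 delta) = pi delta].
Proof.
exact: (@Helpers.main_result Fq K iota0 theta qroot Hqroot1 Hqroot2 phit psit Hphi Hpsi Hrk).
Qed.
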